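(* Let $A$ be a Frobenius algebra over a field $\Bbbk$ and let $M,N$ be finite-dimensional left $A$-modules. Then there is an isomorphism of $\Bbbk$-vector spaces, natural in $M$ and $N$, \[ {\rm Hom}_{A\text{-}\underline{\mathrm{mod}}}(M,N)\cong{\rm Hom}_{A^e\text{-}\underline{\mathrm{mod}}}\big(A,{\rm Hom}_\Bbbk(M,N)\big), \] where $A$ is regarded as an $A^e$-module via left and right multiplication, and ${\rm Hom}_\Bbbk(M,N)$ is the $A^e$-module with $((a\otimes b)\cdot\phi)(m)=a\phi(bm)$.
   Context: $\Bbbk$ is a field and $\otimes=\otimes_\Bbbk$. A Frobenius algebra is a finite-dimensional $\Bbbk$-algebra $A$ with a Frobenius system $(\epsilon,\{a_i\}_{i\in I},\{b_i\}_{i\in I})$: a $\Bbbk$-linear $\epsilon:A\to\Bbbk$ and bases $\{a_i\},\{b_i\}$ of $A$ with $\sum_i a_i\epsilon(b_ia)=a=\sum_i\epsilon(aa_i)b_i$ for all $a\in A$. $A^e=A\otimes A^{\mathrm{op}}$ is the enveloping algebra (left $A^e$-modules are $(A,A)$-bimodules); it is again Frobenius. For a self-injective algebra $B$, the stable category $B\text{-}\underline{\mathrm{mod}}$ has objects the finitely generated left $B$-modules and morphism spaces ${\rm Hom}_B(X,Y)$ modulo the maps factoring through projective-injective $B$-modules. *)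

(* Defs.v *)
From HB Require Import structures.
From mathcomp Require Import all_boot all_order all_algebra all_field.
Set Implicit Arguments. Unset Strict Implicit. Unset Printing Implicit Defensive.
Import GRing.Theory.
Local Open Scope ring_scope.

Section Frob.
Variables (K : fieldType) (A : falgType K).

Definition frobenius_system (eps : 'Hom(A, K^o)) (a b : seq A) : Prop :=
  [/\ basis_of fullv a, basis_of fullv b, size b = size a &
      forall x : A,
        \sum_(i < size a) (eps (b`_i * x) : K) *: a`_i = x /\
        \sum_(i < size a) (eps (x * a`_i) : K) *: b`_i = x].

Definition frobenius_algebra : Prop :=
  exists eps a b, frobenius_system eps a b.

Record lmod := LMod { lmod_sort : vectType K; lmod_act : A -> 'End(lmod_sort) }.

Definition is_lmod (M : lmod) : Prop :=
  [/\ forall (k : K) (x y : A),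
        lmod_act M (k *: x + y) = k *: lmod_act M x + lmod_act M y,
      lmod_act M 1 = \1%VF &
      forall x y : A, lmod_act M (x * y) = (lmod_act M x \o lmod_act M y)%VF].

Definition is_lhom (M N : lmod) (f : 'Hom(lmod_sort M, lmod_sort N)) : Prop :=
  forall x : A, (f \o lmod_act M x)%VF = (lmod_act N x \o f)%VF.

Definition lprojective (P : lmod) : Prop :=
  forall (X Y : lmod) (g : 'Hom(lmod_sort X, lmod_sort Y))
         (h : 'Hom(lmod_sort P, lmod_sort Y)),
    is_lmod X -> is_lmod Y -> is_lhom g -> limg g = fullv -> is_lhom h ->
    exists2 h' : 'Hom(lmod_sort P, lmod_sort X), is_lhom h' & (g \o h')%VF = h.

Definition linjective (I : lmod) : Prop :=
  forall (X Y : lmod) (g : 'Hom(lmod_sort X, lmod_sort Y))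
         (h : 'Hom(lmod_sort X, lmod_sort I)),
    is_lmod X -> is_lmod Y -> is_lhom g -> lker g = 0%VS -> is_lhom h ->
    exists2 h' : 'Hom(lmod_sort Y, lmod_sort I), is_lhom h' & (h' \o g)%VF = h.

Definition lstable_zero (M N : lmod) (f : 'Hom(lmod_sort M, lmod_sort N)) : Prop :=
  exists P : lmod, [/\ is_lmod P, lprojective P, linjective P &
    exists g : 'Hom(lmod_sort M, lmod_sort P), exists h : 'Hom(lmod_sort P, lmod_sort N),
      [/\ is_lhom g, is_lhom h & f = (h \o g)%VF]].

(* ---------- A-bimodules (= left A^e-modules) ---------- *)
Record bimod := BiMod { bimod_sort : vectType K;
  bimod_lact : A -> 'End(bimod_sort); bimod_ract : A -> 'End(bimod_sort) }.

Definition is_bimod (M : bimod) : Prop :=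
  [/\ forall (k : K) (x y : A),
        bimod_lact M (k *: x + y) = k *: bimod_lact M x + bimod_lact M y,
      forall (k : K) (x y : A),
        bimod_ract M (k *: x + y) = k *: bimod_ract M x + bimod_ract M y,
      bimod_lact M 1 = \1%VF /\ bimod_ract M 1 = \1%VF,
      forall x y : A, bimod_lact M (x * y) = (bimod_lact M x \o bimod_lact M y)%VF
                   /\ bimod_ract M (x * y) = (bimod_ract M y \o bimod_ract M x)%VF &
      forall x y : A, (bimod_lact M x \o bimod_ract M y)%VF
                    = (bimod_ract M y \o bimod_lact M x)%VF].

Definition is_bihom (M N : bimod) (f : 'Hom(bimod_sort M, bimod_sort N)) : Prop :=
  forall x : A, (f \o bimod_lact M x)%VF = (bimod_lact N x \o f)%VF /\
                (f \o bimod_ract M x)%VF = (bimod_ract N x \o f)%VF.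

Definition biprojective (P : bimod) : Prop :=
  forall (X Y : bimod) (g : 'Hom(bimod_sort X, bimod_sort Y))
         (h : 'Hom(bimod_sort P, bimod_sort Y)),
    is_bimod X -> is_bimod Y -> is_bihom g -> limg g = fullv -> is_bihom h ->
    exists2 h' : 'Hom(bimod_sort P, bimod_sort X), is_bihom h' & (g \o h')%VF = h.

Definition biinjective (I : bimod) : Prop :=
  forall (X Y : bimod) (g : 'Hom(bimod_sort X, bimod_sort Y))
         (h : 'Hom(bimod_sort X, bimod_sort I)),
    is_bimod X -> is_bimod Y -> is_bihom g -> lker g = 0%VS -> is_bihom h ->
    exists2 h' : 'Hom(bimod_sort Y, bimod_sort I), is_bihom h' & (h' \o g)%VF = h.

Definition bistable_zero (M N : bimod) (f : 'Hom(bimod_sort M, bimod_sort N)) : Prop :=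
  exists P : bimod, [/\ is_bimod P, biprojective P, biinjective P &
    exists g : 'Hom(bimod_sort M, bimod_sort P), exists h : 'Hom(bimod_sort P, bimod_sort N),
      [/\ is_bihom g, is_bihom h & f = (h \o g)%VF]].

Definition regular_bimod : bimod :=
  @BiMod (A : vectType K) (fun a => linfun (fun x : A => a * x))
                          (fun b => linfun (fun x : A => x * b)).

Definition homk_bimod (M N : lmod) : bimod :=
  @BiMod 'Hom(lmod_sort M, lmod_sort N)
    (fun a => linfun (fun phi : 'Hom(lmod_sort M, lmod_sort N) => (lmod_act N a \o phi)%VF))
    (fun b => linfun (fun phi : 'Hom(lmod_sort M, lmod_sort N) => (phi \o lmod_act M b)%VF)).

Definition homk_map (M M' N N' : lmod) (u : 'Hom(lmod_sort M', lmod_sort M))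
  (v : 'Hom(lmod_sort N, lmod_sort N')) :
  'Hom('Hom(lmod_sort M, lmod_sort N), 'Hom(lmod_sort M', lmod_sort N')) :=
  linfun (fun phi : 'Hom(lmod_sort M, lmod_sort N) => (v \o phi \o u)%VF).

End Frob.

(* Main.v *)
Require Import Defs.
From HB Require Import structures.
From mathcomp Require Import all_boot all_order all_algebra all_field.
Import GRing.Theory.
Local Open Scope ring_scope.
Set Implicit Arguments. Unset Strict Implicit. Unset Printing Implicit Defensive.

Lemma lfunE' (K : fieldType) (aT rT : vectType K) (f : aT -> rT) :
  linear f -> linfun f =1 f.
Proof.
move=> Hf u.
pose fL : {linear aT -> rT} := HB.pack f (GRing.isLinear.Build K aT rT *:%R f Hf).
exact: (lfunE fL u).
Qed.

Lemma lin_sumZ (K : fieldType) (U W : vectType K) (f : U -> W) : linear f ->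
  forall n (k : 'I_n -> K) (v : 'I_n -> U),
  f (\sum_(i < n) k i *: v i) = \sum_(i < n) k i *: f (v i).
Proof.
move=> Hf n k v.
pose fL : {linear U -> W} := HB.pack f (GRing.isLinear.Build K U W *:%R f Hf).
rewrite -[f _]/(fL _) linear_sum; apply: eq_bigr => i _; exact: linearZ.
Qed.

Lemma lin_sum (K : fieldType) (U W : vectType K) (f : U -> W) : linear f ->
  forall n (v : 'I_n -> U), f (\sum_(i < n) v i) = \sum_(i < n) f (v i).
Proof.
move=> Hf n v.
pose fL : {linear U -> W} := HB.pack f (GRing.isLinear.Build K U W *:%R f Hf).
by rewrite -[f _]/(fL _) linear_sum.
Qed.

Section Basics.
Variables (K : fieldType) (A : falgType K).

Lemma rmulE (c x : A) : (linfun (fun y : A => y * c)) x = x * c.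
Proof. by rewrite lfunE' // => k u v; rewrite mulrDl scalerAl. Qed.
Lemma lmulE (c x : A) : (linfun (fun y : A => c * y)) x = c * x.
Proof. by rewrite lfunE' // => k u v; rewrite mulrDr scalerAr. Qed.

Lemma postE (U V W : vectType K) (g : 'Hom(V,W)) (h : 'Hom(U,V)) :
  (linfun (fun phi : 'Hom(U,V) => (g \o phi)%VF)) h = (g \o h)%VF.
Proof. by rewrite lfunE' // => k u v; rewrite comp_lfunDr comp_lfunZr. Qed.
Lemma preE (U V W : vectType K) (g : 'Hom(V,W)) (h : 'Hom(U,V)) :
  (linfun (fun phi : 'Hom(V,W) => (phi \o h)%VF)) g = (g \o h)%VF.
Proof. by rewrite lfunE' // => k u v; rewrite comp_lfunDl comp_lfunZl. Qed.

End Basics.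

Section Frob.
Variables (K : fieldType) (A : falgType K) (eps : 'Hom(A, K^o)) (a b : seq A).
Hypothesis Hfs : frobenius_system eps a b.
Local Notation n := (size a).

Lemma F1 x : \sum_(i < n) (eps (b`_i * x) : K) *: a`_i = x.
Proof. by case: Hfs => _ _ _ /(_ x) []. Qed.
Lemma F2 x : \sum_(i < n) (eps (x * a`_i) : K) *: b`_i = x.
Proof. by case: Hfs => _ _ _ /(_ x) []. Qed.

Lemma casimir (W : vectType K) (F : A -> A -> W)
  (HF1 : forall v, linear (fun u => F u v)) (HF2 : forall u, linear (F u)) c :
  \sum_(i < n) F (c * a`_i) b`_i = \sum_(i < n) F a`_i (b`_i * c).
Proof.
transitivity (\sum_(j < n) \sum_(i < n) (eps (b`_i * c * a`_j) : K) *: F a`_i b`_j).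
  apply: eq_bigr => j _.
  rewrite -{1}(F1 (c * a`_j)) (lin_sumZ (HF1 _)).
  by apply: eq_bigr => i _; rewrite mulrA.
rewrite exchange_big /=; apply: eq_bigr => i _.
by rewrite -{2}(F2 (b`_i * c)) (lin_sumZ (HF2 _)).
Qed.

End Frob.

Section Gen.
Variables (K : fieldType).

Definition bil (Y U V : vectType K) (F : Y -> U -> V) : 'Hom(Y, 'Hom(U, V)) :=
  linfun (fun y => linfun (F y)).

Lemma bilE (Y U V : vectType K) (F : Y -> U -> V) :
  (forall y, linear (F y)) -> (forall c, linear (F ^~ c)) ->
  forall y c, bil F y c = F y c.
Proof.
move=> H1 H2 y c; rewrite /bil lfunE' ?lfunE' //.
move=> k y1 y2; apply/lfunP => d.
by rewrite add_lfunE scale_lfunE !lfunE' // H2.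
Qed.

Lemma comp_sumr (U V W : vectType K) (f : 'Hom(V,W)) n (g : 'I_n -> 'Hom(U,V)) :
  (f \o \sum_(i < n) g i)%VF = \sum_(i < n) (f \o g i)%VF.
Proof. by apply/lfunP => u; rewrite comp_lfunE !sum_lfunE linear_sum; apply: eq_bigr => i _; rewrite comp_lfunE. Qed.
Lemma comp_suml (U V W : vectType K) n (f : 'I_n -> 'Hom(V,W)) (g : 'Hom(U,V)) :
  ((\sum_(i < n) f i) \o g)%VF = \sum_(i < n) (f i \o g)%VF.
Proof. by apply/lfunP => u; rewrite comp_lfunE !sum_lfunE; apply: eq_bigr => i _; rewrite comp_lfunE. Qed.

End Gen.

Section LModules.
Variables (K : fieldType) (A : falgType K).

Definition rmul (c : A) : 'End(A) := linfun (fun y : A => y * c).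
Definition lmul (c : A) : 'End(A) := linfun (fun y : A => c * y).

Lemma actD (M : lmod A) : is_lmod M -> forall k x y m,
  lmod_act M (k *: x + y) m = k *: lmod_act M x m + lmod_act M y m.
Proof. by case=> H _ _ k x y m; rewrite H add_lfunE scale_lfunE. Qed.
Lemma act1 (M : lmod A) : is_lmod M -> forall m, lmod_act M 1 m = m.
Proof. by case=> _ H _ m; rewrite H id_lfunE. Qed.
Lemma actM (M : lmod A) : is_lmod M -> forall x y m,
  lmod_act M (x * y) m = lmod_act M x (lmod_act M y m).
Proof. by case=> _ _ H x y m; rewrite H comp_lfunE. Qed.
Lemma act_lin (M : lmod A) : is_lmod M -> linear (lmod_act M).
Proof. by case. Qed.

Definition Coind (V : vectType K) : lmod A :=
  @LMod K A 'Hom(A, V) (fun c => linfun (fun phi : 'Hom(A,V) => (phi \o rmul c)%VF)).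

Lemma coindE (V : vectType K) c (phi : 'Hom(A, V)) x :
  lmod_act (Coind V) c phi x = phi (x * c).
Proof. by rewrite /= preE comp_lfunE /rmul rmulE. Qed.

Lemma coind_lmod V : is_lmod (Coind V).
Proof.
split.
- move=> k x y; apply/lfunP => phi; apply/lfunP => z.
  rewrite add_lfunE scale_lfunE add_lfunE scale_lfunE !coindE mulrDr -scalerAr.
  by rewrite linearP.
- by apply/lfunP => phi; apply/lfunP => z; rewrite coindE id_lfunE mulr1.
- by move=> x y; apply/lfunP => phi; apply/lfunP => z; rewrite comp_lfunE !coindE mulrA.
Qed.

Lemma coind_inj V : linjective (Coind V).
Proof.
move=> X Y g h HX HY Hg Hker Hh.
pose r := (g^-1)%VF.
have rg : forall x, r (g x) = x.
  by move=> x; rewrite -comp_lfunE lker0_compVf ?Hker // id_lfunE.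
pose h' := bil (fun (y : lmod_sort Y) (c : A) => h (r (lmod_act Y c y)) 1).
have h'E : forall y c, h' y c = h (r (lmod_act Y c y)) 1.
  apply: bilE => [y k c1 c2|c k y1 y2].
    by rewrite actD // !linearP add_lfunE scale_lfunE.
  by rewrite !linearP add_lfunE scale_lfunE.
exists h'.
  move=> x; apply/lfunP => y; apply/lfunP => c.
  by rewrite !comp_lfunE coindE !h'E actM.
apply/lfunP => x; apply/lfunP => c.
rewrite comp_lfunE h'E.
have := Hg c; move/lfunP/(_ x); rewrite !comp_lfunE => <-.
rewrite rg; have := Hh c; move/lfunP/(_ x); rewrite !comp_lfunE => ->.
by rewrite coindE mul1r.
Qed.

End LModules.

Section LFrob.
Variables (K : fieldType) (A : falgType K) (eps : 'Hom(A, K^o)) (a b : seq A).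
Hypothesis Hfs : frobenius_system eps a b.
Local Notation n := (size a).

Definition ev (V : vectType K) (x : A) : 'Hom('Hom(A, V), V) :=
  linfun (fun phi : 'Hom(A, V) => phi x).
Lemma evE (V : vectType K) x phi : @ev V x phi = phi x.
Proof. by rewrite lfunE' // => k p q; rewrite add_lfunE scale_lfunE. Qed.

Definition psiL (V : vectType K) : 'Hom(V, 'Hom(A, V)) :=
  bil (fun (v : V) (x : A) => (eps x : K) *: v).
Lemma psiE (V : vectType K) v x : psiL V v x = (eps x : K) *: v.
Proof.
apply: bilE => [y k c1 c2|c k y1 y2]; first by rewrite linearP scalerDl scalerA.
by rewrite scalerDr !scalerA mulrC.
Qed.

Lemma coindD1 (V : vectType K) (phi : 'Hom(A, V)) :
  phi = \sum_(i < n) lmod_act (Coind A V) a`_i (psiL V (phi b`_i)).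
Proof.
apply/lfunP => x; rewrite sum_lfunE.
rewrite -{1}(F2 Hfs x) linear_sum; apply: eq_bigr => i _.
by rewrite coindE psiE linearZ.
Qed.

Lemma coind_proj (V : vectType K) : lprojective (Coind A V).
Proof.
move=> X Y g h HX HY Hg Hsurj Hh.
pose s := (g^-1)%VF.
have gs : forall y, g (s y) = y.
  by move=> y; rewrite limg_lfunVK // Hsurj memvf.
pose h' := \sum_(i < n) (lmod_act X a`_i \o s \o h \o psiL V \o ev V b`_i)%VF.
have h'E : forall phi, h' phi = \sum_(i < n) lmod_act X a`_i (s (h (psiL V (phi b`_i)))).
  by move=> phi; rewrite sum_lfunE; apply: eq_bigr => i _; rewrite !comp_lfunE evE.
have Hg' : forall c x, g (lmod_act X c x) = lmod_act Y c (g x).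
  by move=> c x; have := Hg c; move/lfunP/(_ x); rewrite !comp_lfunE.
have Hh' : forall c x, h (lmod_act (Coind A V) c x) = lmod_act Y c (h x).
  by move=> c x; have := Hh c; move/lfunP/(_ x); rewrite !comp_lfunE.
exists h'.
  move=> c; apply/lfunP => phi; rewrite !comp_lfunE !h'E linear_sum /=.
  under [RHS]eq_bigr do rewrite -actM //.
  rewrite (@casimir _ _ _ _ _ Hfs _ (fun u v : A => lmod_act X u (s (h (psiL V ((phi : 'Hom(A,V)) v)))))).
  - by apply: eq_bigr => i _; rewrite coindE.
  - by move=> v k u1 u2; rewrite actD.
  - by move=> u k v1 v2; rewrite !linearP.
apply/lfunP => phi; rewrite comp_lfunE h'E linear_sum {2}(coindD1 phi) linear_sum.
by apply: eq_bigr => i _; apply: (etrans (Hg' _ _)); rewrite gs -Hh'.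
Qed.

Definition Tr (M N : lmod A) (s : 'Hom(lmod_sort M, lmod_sort N)) :
  'Hom(lmod_sort M, lmod_sort N) :=
  \sum_(i < n) (lmod_act N a`_i \o s \o lmod_act M b`_i)%VF.

Lemma TrE M N s m : @Tr M N s m = \sum_(i < n) lmod_act N a`_i (s (lmod_act M b`_i m)).
Proof. by rewrite sum_lfunE; apply: eq_bigr => i _; rewrite !comp_lfunE. Qed.

Lemma lhomE (M N : lmod A) (f : 'Hom(lmod_sort M, lmod_sort N)) :
  is_lhom f -> forall c m, f (lmod_act M c m) = lmod_act N c (f m).
Proof. by move=> Hf c m; have := Hf c; move/lfunP/(_ m); rewrite !comp_lfunE. Qed.

Lemma id_Tr (P : lmod A) : is_lmod P -> linjective P ->
  exists t, (\1 : 'End(lmod_sort P))%VF = Tr t.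
Proof.
move=> HP HI.
pose io := bil (fun (p : lmod_sort P) (x : A) => lmod_act P x p).
have ioE : forall p x, io p x = lmod_act P x p.
  apply: bilE => [y k c1 c2|c k y1 y2]; first by rewrite actD.
  by rewrite linearP.
have Hio : is_lhom (M:=P) (N:=Coind A (lmod_sort P)) io.
  by move=> c; apply/lfunP => p; apply/lfunP => x; rewrite !comp_lfunE coindE !ioE actM.
have Hker : lker io = 0%VS.
  apply/eqP/lker0P => p q E.
  by rewrite -(act1 HP p) -(act1 HP q) -!ioE E.
have H1 : is_lhom (M:=P) (N:=P) \1%VF.
  by move=> c; rewrite comp_lfun1l comp_lfun1r.
have [r Hr Hri] := HI P (Coind A (lmod_sort P)) io \1%VF HP (coind_lmod A _) Hio Hker H1.
exists (r \o psiL _)%VF.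
apply/lfunP => p; rewrite id_lfunE TrE.
have Hp : r (io p) = p by rewrite -comp_lfunE Hri id_lfunE.
rewrite -{1}Hp {1}(coindD1 (io p)) linear_sum; apply: eq_bigr => i _.
by apply: etrans (lhomE Hr _ _) _; rewrite comp_lfunE ioE.
Qed.

Lemma stable_Tr (M N : lmod A) (f : 'Hom(lmod_sort M, lmod_sort N)) :
  is_lmod M -> is_lmod N -> lstable_zero f -> exists s, f = Tr s.
Proof.
move=> HM HN [P [HP _ HI [g [h [Hg Hh ->]]]]].
have [t Ht] := id_Tr HP HI.
exists (h \o t \o g)%VF.
apply/lfunP => m; rewrite comp_lfunE TrE -[g m]id_lfunE Ht TrE linear_sum.
by apply: eq_bigr => i _; apply: etrans (lhomE Hh _ _) _; rewrite !comp_lfunE (lhomE Hg).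
Qed.

Lemma Tr_stable (M N : lmod A) (s : 'Hom(lmod_sort M, lmod_sort N)) :
  is_lmod M -> is_lmod N -> lstable_zero (Tr s).
Proof.
move=> HM HN; exists (Coind A (lmod_sort N)); split.
- exact: coind_lmod.
- exact: coind_proj.
- exact: coind_inj.
pose gg := bil (fun (m : lmod_sort M) (x : A) => s (lmod_act M x m)).
have ggE : forall m x, gg m x = s (lmod_act M x m).
  apply: bilE => [y k c1 c2|c k y1 y2]; first by rewrite actD // linearP.
  by rewrite !linearP.
pose hh := \sum_(i < n) (lmod_act N a`_i \o ev (lmod_sort N) b`_i)%VF.
have hhE : forall phi, hh phi = \sum_(i < n) lmod_act N a`_i (phi b`_i).
  by move=> phi; rewrite sum_lfunE; apply: eq_bigr => i _; rewrite comp_lfunE evE.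
exists gg, hh; split.
- by move=> c; apply/lfunP => m; apply/lfunP => x; rewrite !comp_lfunE coindE !ggE actM.
- move=> c; apply/lfunP => phi; rewrite !comp_lfunE !hhE linear_sum /=.
  under [RHS]eq_bigr do rewrite -actM //.
  rewrite (@casimir _ _ _ _ _ Hfs _ (fun u v : A => lmod_act N u ((phi : 'Hom(A, lmod_sort N)) v))).
  + by apply: eq_bigr => i _; rewrite coindE.
  + by move=> v k u1 u2; rewrite actD.
  + by move=> u k v1 v2; rewrite !linearP.
- by apply/lfunP => m; rewrite TrE comp_lfunE hhE; apply: eq_bigr => i _; rewrite ggE.
Qed.

End LFrob.

Section Tri.
Variables (K : fieldType).
Definition tri (Y U1 U2 V : vectType K) (F : Y -> U1 -> U2 -> V) :
  'Hom(Y, 'Hom(U1, 'Hom(U2, V))) := linfun (fun y => bil (F y)).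

Lemma triE (Y U1 U2 V : vectType K) (F : Y -> U1 -> U2 -> V) :
  (forall y x, linear (F y x)) -> (forall y z, linear (F y ^~ z)) ->
  (forall x z, linear (fun y => F y x z)) ->
  forall y x z, tri F y x z = F y x z.
Proof.
move=> H1 H2 H3 y x z; rewrite /tri lfunE' ?bilE //.
move=> k y1 y2; apply/lfunP => u; apply/lfunP => w.
  by rewrite bilE // (add_lfunE (k *: bil (F y1)) (bil (F y2)) u) add_lfunE !scale_lfunE !bilE // H3.
Qed.
End Tri.

Section BiModules.
Variables (K : fieldType) (A : falgType K).

Section BiAx.
Variable X : bimod A.
Hypothesis HX : is_bimod X.
Local Notation la := (bimod_lact X).
Local Notation ra := (bimod_ract X).
Lemma ladD k x y v : la (k *: x + y) v = k *: la x v + la y v.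
Proof. by case: HX => H _ _ _ _; rewrite H add_lfunE scale_lfunE. Qed.
Lemma radD k x y v : ra (k *: x + y) v = k *: ra x v + ra y v.
Proof. by case: HX => _ H _ _ _; rewrite H add_lfunE scale_lfunE. Qed.
Lemma lad1 v : la 1 v = v.
Proof. by case: HX => _ _ [H _] _ _; rewrite H id_lfunE. Qed.
Lemma rad1 v : ra 1 v = v.
Proof. by case: HX => _ _ [_ H] _ _; rewrite H id_lfunE. Qed.
Lemma ladM x y v : la (x * y) v = la x (la y v).
Proof. by case: HX => _ _ _ /(_ x y) [H _] _; rewrite H comp_lfunE. Qed.
Lemma radM x y v : ra (x * y) v = ra y (ra x v).
Proof. by case: HX => _ _ _ /(_ x y) [_ H] _; rewrite H comp_lfunE. Qed.
Lemma lrC x y v : la x (ra y v) = ra y (la x v).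
Proof. by case: HX => _ _ _ _ /(_ x y) H; rewrite -comp_lfunE H comp_lfunE. Qed.
End BiAx.

Lemma bihomL (M N : bimod A) (f : 'Hom(bimod_sort M, bimod_sort N)) :
  is_bihom f -> forall c v, f (bimod_lact M c v) = bimod_lact N c (f v).
Proof. by move=> Hf c v; have [+ _] := Hf c; move/lfunP/(_ v); rewrite !comp_lfunE. Qed.
Lemma bihomR (M N : bimod A) (f : 'Hom(bimod_sort M, bimod_sort N)) :
  is_bihom f -> forall c v, f (bimod_ract M c v) = bimod_ract N c (f v).
Proof. by move=> Hf c v; have [_ +] := Hf c; move/lfunP/(_ v); rewrite !comp_lfunE. Qed.

Definition BC (V : vectType K) : bimod A :=
  @BiMod K A 'Hom(A, 'Hom(A, V))
    (fun c => linfun (fun Phi : 'Hom(A, 'Hom(A, V)) => (Phi \o rmul c)%VF))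
    (fun c => linfun (fun Phi : 'Hom(A, 'Hom(A, V)) =>
        (linfun (fun psi : 'Hom(A, V) => (psi \o lmul c)%VF) \o Phi)%VF)).

Lemma bcLE (V : vectType K) c (Phi : 'Hom(A, 'Hom(A, V))) x y :
  bimod_lact (BC V) c Phi x y = Phi (x * c) y.
Proof. by rewrite /= preE comp_lfunE /rmul rmulE. Qed.
Lemma bcRE (V : vectType K) c (Phi : 'Hom(A, 'Hom(A, V))) x y :
  bimod_ract (BC V) c Phi x y = Phi x (c * y).
Proof. by rewrite /= postE comp_lfunE preE comp_lfunE /lmul lmulE. Qed.

Lemma bc_bimod (V : vectType K) : is_bimod (BC V).
Proof.
split.
- move=> k x y; apply/lfunP => P; apply/lfunP => u; apply/lfunP => w.
  rewrite !(add_lfunE, scale_lfunE) !bcLE mulrDr -scalerAr linearP.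
  by rewrite add_lfunE scale_lfunE.
- move=> k x y; apply/lfunP => P; apply/lfunP => u; apply/lfunP => w.
  rewrite !(add_lfunE, scale_lfunE) !bcRE mulrDl -scalerAl linearP.
  by [].
- by split; apply/lfunP => P; apply/lfunP => u; apply/lfunP => w;
    rewrite ?bcLE ?bcRE id_lfunE ?mulr1 ?mul1r.
- by move=> x y; split; apply/lfunP => P; apply/lfunP => u; apply/lfunP => w;
    rewrite comp_lfunE ?bcLE ?bcRE ?bcLE ?bcRE mulrA.
- by move=> x y; apply/lfunP => P; apply/lfunP => u; apply/lfunP => w;
    rewrite !comp_lfunE ?bcLE ?bcRE ?bcLE ?bcRE.
Qed.

Lemma bc_inj (V : vectType K) : biinjective (BC V).
Proof.
move=> X Y g h HX HY Hg Hker Hh.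
pose r := (g^-1)%VF.
have rg : forall x, r (g x) = x.
  by move=> x; rewrite -comp_lfunE lker0_compVf ?Hker // id_lfunE.
pose h' := tri (fun (y : bimod_sort Y) (x z : A) =>
   h (r (bimod_ract Y z (bimod_lact Y x y))) 1 1).
have h'E : forall y x z, h' y x z = h (r (bimod_ract Y z (bimod_lact Y x y))) 1 1.
  apply: triE => [y x k z1 z2|y z k x1 x2|x z k y1 y2].
  - by rewrite radD // !linearP add_lfunE scale_lfunE add_lfunE scale_lfunE.
  - by rewrite ladD // !linearP add_lfunE scale_lfunE add_lfunE scale_lfunE.
  - by rewrite !linearP add_lfunE scale_lfunE add_lfunE scale_lfunE.
exists h'.
  move=> c; split; apply/lfunP => y; apply/lfunP => x; apply/lfunP => z;
    rewrite !comp_lfunE ?bcLE ?bcRE !h'E.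
    by rewrite ladM.
  by rewrite lrC // radM.
apply/lfunP => v; apply/lfunP => x; apply/lfunP => z.
rewrite comp_lfunE h'E -(bihomL Hg) -(bihomR Hg) rg (bihomR Hh) (bihomL Hh).
by rewrite bcRE bcLE mulr1 mul1r.
Qed.

End BiModules.

Section BFrob.
Variables (K : fieldType) (A : falgType K) (eps : 'Hom(A, K^o)) (a b : seq A).
Hypothesis Hfs : frobenius_system eps a b.
Local Notation n := (size a).

Lemma epsP k (x y : A) : (eps (k *: x + y) : K) = k * (eps x : K) + eps y.
Proof. by rewrite linearP. Qed.

Definition PsiB (V : vectType K) : 'Hom(V, 'Hom(A, 'Hom(A, V))) :=
  tri (fun (v : V) (x y : A) => ((eps x : K) * (eps y : K)) *: v).
Lemma PsiBE (V : vectType K) v x y : PsiB V v x y = ((eps x : K) * (eps y : K)) *: v.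
Proof.
apply: triE => [v' x' k y1 y2|v' y' k x1 x2|x' y' k v1 v2].
- by rewrite (epsP k y1 y2) mulrDr scalerDl mulrCA scalerA.
- by rewrite (epsP k x1 x2) mulrDl scalerDl -mulrA scalerA.
- by rewrite scalerDr !scalerA [_ * k]mulrC.
Qed.

Lemma ev_sumZ (U W1 W2 : vectType K) (Phi : 'Hom(U, 'Hom(W1, W2))) m
  (k : 'I_m -> K) (u : 'I_m -> U) y :
  Phi (\sum_(i < m) k i *: u i) y = \sum_(i < m) k i *: Phi (u i) y.
Proof.
apply: (lin_sumZ (f := fun u => Phi u y)) => c p q.
by rewrite linearP add_lfunE scale_lfunE.
Qed.

Lemma bcD2 (V : vectType K) (Phi : 'Hom(A, 'Hom(A, V))) :
  Phi = \sum_(i < n) \sum_(j < n)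
     bimod_lact (BC A V) a`_i (bimod_ract (BC A V) b`_j (PsiB V (Phi b`_i a`_j))).
Proof.
apply/lfunP => x; apply/lfunP => y.
rewrite !sum_lfunE -{1}(F2 Hfs x) ev_sumZ; apply: eq_bigr => i _.
have Hl : linear (Phi b`_i) by move=> ? ? ?; rewrite linearP.
rewrite -{1}(F1 Hfs y) (lin_sumZ Hl) scaler_sumr !sum_lfunE.
apply: eq_bigr => j _.
by rewrite bcLE bcRE PsiBE scalerA.
Qed.

Lemma linP (U W : vectType K) (f : 'Hom(U, W)) : linear f.
Proof. by move=> ? ? ?; rewrite linearP. Qed.

Lemma bc_proj (V : vectType K) : biprojective (BC A V).
Proof.
move=> X Y g h HX HY Hg Hsurj Hh.
pose s := (g^-1)%VF.
have gs : forall y, g (s y) = y.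
  by move=> y; rewrite limg_lfunVK // Hsurj memvf.
pose h' := \sum_(i < n) \sum_(j < n) (bimod_lact X a`_i \o bimod_ract X b`_j \o s \o h
    \o PsiB V \o ev V a`_j \o ev 'Hom(A, V) b`_i)%VF.
have h'E : forall Phi, h' Phi = \sum_(i < n) \sum_(j < n)
    bimod_lact X a`_i (bimod_ract X b`_j (s (h (PsiB V (Phi b`_i a`_j))))).
  move=> Phi; rewrite sum_lfunE; apply: eq_bigr => i _.
  by rewrite sum_lfunE; apply: eq_bigr => j _; rewrite !comp_lfunE !evE.
exists h'.
  move=> c; split; apply/lfunP => Phi; rewrite !comp_lfunE !h'E.
    pose F := fun u v : A => \sum_(j < n)
       bimod_lact X u (bimod_ract X b`_j (s (h (PsiB V (Phi v a`_j))))).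
    have -> : \sum_(i < n) \sum_(j < n)
       bimod_lact X a`_i (bimod_ract X b`_j (s (h (PsiB V ((bimod_lact (BC A V) c Phi) b`_i a`_j)))))
       = \sum_(i < n) F a`_i (b`_i * c).
      by apply: eq_bigr => i _; apply: eq_bigr => j _; rewrite bcLE.
    rewrite -(@casimir _ _ _ _ _ Hfs _ F).
    + rewrite (lin_sum (linP _)); apply: eq_bigr => i _.
      rewrite (lin_sum (linP _)); apply: eq_bigr => j _.
      by rewrite ladM.
    + move=> v k u1 u2; rewrite scaler_sumr -big_split; apply: eq_bigr => j _.
      exact: ladD.
    + move=> u k v1 v2; rewrite scaler_sumr -big_split; apply: eq_bigr => j _.
      by rewrite linearP add_lfunE scale_lfunE !linearP.
  pose F := fun u v : A => \sum_(i < n)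
     bimod_lact X a`_i (bimod_ract X v (s (h (PsiB V (Phi b`_i u))))).
  have -> : \sum_(i < n) \sum_(j < n)
     bimod_lact X a`_i (bimod_ract X b`_j (s (h (PsiB V ((bimod_ract (BC A V) c Phi) b`_i a`_j)))))
     = \sum_(j < n) F (c * a`_j) b`_j.
    by rewrite exchange_big; apply: eq_bigr => j _; apply: eq_bigr => i _; rewrite bcRE.
  rewrite (@casimir _ _ _ _ _ Hfs _ F).
  + rewrite (lin_sum (linP _)); under [RHS]eq_bigr do rewrite (lin_sum (linP _)).
    rewrite [RHS]exchange_big; apply: eq_bigr => j _; rewrite /F; apply: eq_bigr => i _.
    by rewrite radM // lrC.
  + move=> v k u1 u2; rewrite scaler_sumr -big_split; apply: eq_bigr => i _.
    by rewrite !linearP.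
  + move=> u k v1 v2; rewrite scaler_sumr -big_split; apply: eq_bigr => i _.
    by rewrite radD // linearP.
apply/lfunP => Phi; rewrite comp_lfunE h'E {2}(bcD2 Phi).
rewrite (lin_sum (linP g)) (lin_sum (linP h)); apply: eq_bigr => i _.
rewrite (lin_sum (linP g)) (lin_sum (linP h)); apply: eq_bigr => j _.
by rewrite (bihomL Hg) (bihomR Hg) gs (bihomL Hh) (bihomR Hh).
Qed.

Definition PhiM (M N : lmod A) (f : 'Hom(lmod_sort M, lmod_sort N)) :
  'Hom(A, 'Hom(lmod_sort M, lmod_sort N)) :=
  linfun (fun c : A => (lmod_act N c \o f)%VF).

Lemma PhiE (M N : lmod A) f c : is_lmod N -> @PhiM M N f c = (lmod_act N c \o f)%VF.
Proof.
move=> [HN _ _]; rewrite lfunE' // => k x y.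
by rewrite HN comp_lfunDl comp_lfunZl.
Qed.

Lemma homkLE (M N : lmod A) c phi :
  bimod_lact (homk_bimod M N) c phi = (lmod_act N c \o phi)%VF.
Proof. by rewrite /= postE. Qed.
Lemma homkRE (M N : lmod A) c phi :
  bimod_ract (homk_bimod M N) c phi = (phi \o lmod_act M c)%VF.
Proof. by rewrite /= preE. Qed.
Lemma regLE c x : bimod_lact (regular_bimod A) c x = c * x.
Proof. by rewrite /= lmulE. Qed.
Lemma regRE c x : bimod_ract (regular_bimod A) c x = x * c.
Proof. by rewrite /= rmulE. Qed.

Definition postc (U V W : vectType K) (f : 'Hom(V, W)) : 'Hom('Hom(U, V), 'Hom(U, W)) :=
  linfun (fun phi : 'Hom(U, V) => (f \o phi)%VF).
Definition prec (U V W : vectType K) (g : 'Hom(U, V)) : 'Hom('Hom(V, W), 'Hom(U, W)) :=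
  linfun (fun phi : 'Hom(V, W) => (phi \o g)%VF).

Lemma actC (M : lmod A) : is_lmod M -> forall x y,
  lmod_act M (x * y) = (lmod_act M x \o lmod_act M y)%VF.
Proof. by case. Qed.
Lemma actL (M : lmod A) : is_lmod M -> forall k x y,
  lmod_act M (k *: x + y) = k *: lmod_act M x + lmod_act M y.
Proof. by case. Qed.

Lemma Tr_bistable (M N : lmod A) (s : 'Hom(lmod_sort M, lmod_sort N)) :
  is_lmod M -> is_lmod N ->
  bistable_zero (M := regular_bimod A) (N := homk_bimod M N) (PhiM (Tr a b s)).
Proof.
move=> HM HN.
pose W := 'Hom(lmod_sort M, lmod_sort N).
exists (BC A W); split; [exact: bc_bimod | exact: bc_proj | exact: bc_inj |].
pose G := tri (fun (c x y : A) => (eps (x * c * y) : K) *: (s : W)).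
have GE : forall c x y, G c x y = (eps (x * c * y) : K) *: (s : W).
  apply: triE => [c x k y1 y2|c y k x1 x2|x y k c1 c2].
  - by rewrite mulrDr -scalerAr (epsP k) scalerDl scalerA.
  - by rewrite !mulrDl -!scalerAl (epsP k) scalerDl scalerA.
  - by rewrite mulrDr mulrDl -scalerAr -scalerAl (epsP k) scalerDl scalerA.
pose H := \sum_(i < n) \sum_(j < n) (postc _ (lmod_act N a`_i) \o prec _ (lmod_act M b`_j)
            \o ev W a`_j \o ev 'Hom(A, W) b`_i)%VF.
have HE : forall Phi, H Phi = \sum_(i < n) \sum_(j < n)
     (lmod_act N a`_i \o Phi b`_i a`_j \o lmod_act M b`_j)%VF.
  move=> Phi; rewrite sum_lfunE; apply: eq_bigr => i _.
  rewrite sum_lfunE; apply: eq_bigr => j _.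
  by rewrite !comp_lfunE !evE /postc /prec preE postE comp_lfunA.
exists G, H; split.
- move=> c; split; apply/lfunP => d; apply/lfunP => x; apply/lfunP => y;
    rewrite !comp_lfunE ?regLE ?regRE ?bcLE ?bcRE !GE !mulrA //.
- move=> c; split; apply/lfunP => Phi; rewrite !comp_lfunE HE ?homkLE ?homkRE HE.
    pose F := fun u v : A => \sum_(j < n)
       (lmod_act N u \o Phi v a`_j \o lmod_act M b`_j)%VF.
    have -> : \sum_(i < n) \sum_(j < n)
       (lmod_act N a`_i \o (bimod_lact (BC A W) c Phi) b`_i a`_j \o lmod_act M b`_j)%VF
       = \sum_(i < n) F a`_i (b`_i * c).
      by apply: eq_bigr => i _; apply: eq_bigr => j _; rewrite bcLE.
    rewrite -(@casimir _ _ _ _ _ Hfs _ F).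
    + rewrite comp_sumr; apply: eq_bigr => i _.
      rewrite /F comp_sumr; apply: eq_bigr => j _.
      by rewrite (actC HN) !comp_lfunA.
    + move=> v k u1 u2; rewrite scaler_sumr -big_split; apply: eq_bigr => j _.
      by rewrite (actL HN) !comp_lfunDl -!comp_lfunZl.
    + move=> u k v1 v2; rewrite scaler_sumr -big_split; apply: eq_bigr => j _.
      by rewrite linearP add_lfunE scale_lfunE comp_lfunDr -comp_lfunZr comp_lfunDl -comp_lfunZl.
  pose F := fun u v : A => \sum_(i < n)
     (lmod_act N a`_i \o Phi b`_i u \o lmod_act M v)%VF.
  have -> : \sum_(i < n) \sum_(j < n)
     (lmod_act N a`_i \o (bimod_ract (BC A W) c Phi) b`_i a`_j \o lmod_act M b`_j)%VF
     = \sum_(j < n) F (c * a`_j) b`_j.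
    by rewrite exchange_big; apply: eq_bigr => j _; apply: eq_bigr => i _; rewrite bcRE.
  rewrite (@casimir _ _ _ _ _ Hfs _ F).
  + rewrite comp_suml exchange_big; apply: eq_bigr => j _.
    rewrite /F comp_suml; apply: eq_bigr => i _.
    by rewrite (actC HM) !comp_lfunA.
  + move=> v k u1 u2; rewrite scaler_sumr -big_split; apply: eq_bigr => i _.
    by rewrite linearP comp_lfunDr -comp_lfunZr comp_lfunDl -comp_lfunZl.
  + move=> u k v1 v2; rewrite scaler_sumr -big_split; apply: eq_bigr => i _.
    by rewrite (actL HM) comp_lfunDr -comp_lfunZr.
- apply/lfunP => c; apply/lfunP => m.
  rewrite PhiE // comp_lfunE HE comp_lfunE TrE (lin_sum (linP _)) sum_lfunE.
  under [RHS]eq_bigr do rewrite sum_lfunE.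
  rewrite [RHS]exchange_big.
  apply: eq_bigr => j _.
  have Hl : linear (fun u => lmod_act N u (s (lmod_act M b`_j m))).
    by move=> k u1 u2; rewrite actD.
  rewrite -actM // -{1}(F1 Hfs (c * a`_j)) (lin_sumZ Hl); apply: eq_bigr => i _.
  by rewrite !comp_lfunE GE scale_lfunE linearZ mulrA.
Qed.

Lemma bistable_Tr (M N : lmod A) (f : 'Hom(lmod_sort M, lmod_sort N)) :
  is_lmod M -> is_lmod N ->
  bistable_zero (M := regular_bimod A) (N := homk_bimod M N) (PhiM f) ->
  exists s, f = Tr a b s.
Proof.
move=> HM HN [P [HP _ HI [G [H [HG HH E]]]]].
pose io := tri (fun (p : bimod_sort P) (x y : A) => bimod_ract P y (bimod_lact P x p)).
have ioE : forall p x y, io p x y = bimod_ract P y (bimod_lact P x p).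
  apply: triE => [p x k y1 y2|p y k x1 x2|x y k p1 p2].
  - by rewrite radD.
  - by rewrite ladD // linearP.
  - by rewrite !linearP.
have Hio : is_bihom (M := P) (N := BC A (bimod_sort P)) io.
  move=> c; split; apply/lfunP => p; apply/lfunP => x; apply/lfunP => y;
    rewrite !comp_lfunE ?bcLE ?bcRE !ioE.
    by rewrite ladM.
  by rewrite lrC // radM.
have Hker : lker io = 0%VS.
  apply/eqP/lker0P => p q Epq.
  by rewrite -(lad1 HP p) -(rad1 HP (bimod_lact P 1 p)) -(lad1 HP q)
    -(rad1 HP (bimod_lact P 1 q)) -!ioE Epq.
have H1 : is_bihom (M := P) (N := P) \1%VF.
  by move=> c; split; rewrite comp_lfun1l comp_lfun1r.
have [r Hr Hri] := HI P (BC A (bimod_sort P)) io \1%VF HP (bc_bimod _ _) Hio Hker H1.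
have Hp : forall p, p = \sum_(i < n) \sum_(j < n) bimod_lact P a`_i
     (bimod_ract P b`_j (r (PsiB (bimod_sort P) (io p b`_i a`_j)))).
  move=> p.
  have rp : r (io p) = p by rewrite -comp_lfunE Hri id_lfunE.
  rewrite -{1}rp {1}(bcD2 (io p)) (lin_sum (linP r)); apply: eq_bigr => i _.
  rewrite (lin_sum (linP r)); apply: eq_bigr => j _.
  by rewrite (bihomL Hr) (bihomR Hr).
have Hf : f = H (G 1).
  have E1 : PhiM f 1 = H (G 1) by rewrite E comp_lfunE.
  by rewrite -E1 PhiE //; case: HN => _ -> _; rewrite comp_lfun1l.
pose T := (H \o r \o PsiB (bimod_sort P) \o G)%VF.
exists (\sum_(i < n) (lmod_act N a`_i \o T b`_i)%VF).
have -> : f = \sum_(i < n) \sum_(j < n)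
    (lmod_act N a`_i \o T (b`_i * a`_j) \o lmod_act M b`_j)%VF.
  rewrite Hf {1}(Hp (G 1)) (lin_sum (linP H)); apply: eq_bigr => i _.
  rewrite (lin_sum (linP H)); apply: eq_bigr => j _.
  rewrite (bihomL HH) (bihomR HH) homkLE homkRE !comp_lfunE ioE.
  by rewrite -(bihomL HG) -(bihomR HG) regLE regRE mulr1 comp_lfunA.
rewrite /Tr exchange_big; apply: eq_bigr => j _.
rewrite comp_sumr comp_suml.
pose F := fun u v : A => (lmod_act N u \o T v \o lmod_act M b`_j)%VF.
rewrite -[LHS]/(\sum_(i < n) F a`_i (b`_i * a`_j)).
rewrite -(@casimir _ _ _ _ _ Hfs _ F).
- by apply: eq_bigr => i _; rewrite /F (actC HN) !comp_lfunA.
- by move=> v k u1 u2; rewrite /F (actL HN) !comp_lfunDl -!comp_lfunZl.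
- by move=> u k v1 v2; rewrite /F linearP comp_lfunDr -comp_lfunZr comp_lfunDl -comp_lfunZl.
Qed.

End BFrob.

Lemma zero_bistable (K : fieldType) (A : falgType K) (eps : 'Hom(A, K^o)) (a b : seq A) :
  frobenius_system eps a b -> forall (M N : bimod A),
  bistable_zero (0 : 'Hom(bimod_sort M, bimod_sort N)).
Proof.
move=> Hfs M N; exists (BC A (bimod_sort N)); split.
- exact: bc_bimod.
- exact: (bc_proj Hfs).
- exact: bc_inj.
exists 0, 0; split.
- by move=> c; split; rewrite comp_lfun0l comp_lfun0r.
- by move=> c; split; rewrite comp_lfun0l comp_lfun0r.
- by rewrite comp_lfun0l.
Qed.

Unset Implicit Arguments.
Unset Strict Implicit.

Theorem mainTheorem6 (K : fieldType) (A : falgType K) (HA : frobenius_algebra A) :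
  exists Phi : forall M N : lmod A,
      'Hom(lmod_sort M, lmod_sort N) ->
      'Hom(bimod_sort (regular_bimod A), bimod_sort (homk_bimod M N)),
    (forall M N : lmod A, is_lmod M -> is_lmod N ->
      [/\ linear (Phi M N),
          forall f : 'Hom(lmod_sort M, lmod_sort N), is_lhom f -> is_bihom (Phi M N f),
          forall f : 'Hom(lmod_sort M, lmod_sort N), is_lhom f ->
            (lstable_zero f <-> bistable_zero (Phi M N f)) &
          forall g : 'Hom(bimod_sort (regular_bimod A), bimod_sort (homk_bimod M N)),
            is_bihom g ->
            exists2 f : 'Hom(lmod_sort M, lmod_sort N), is_lhom f & bistable_zero (g - Phi M N f)]) /\
    (forall (M M' N N' : lmod A) (u : 'Hom(lmod_sort M', lmod_sort M))
            (v : 'Hom(lmod_sort N, lmod_sort N')) (f : 'Hom(lmod_sort M, lmod_sort N)),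
      is_lmod M -> is_lmod M' -> is_lmod N -> is_lmod N' ->
      is_lhom u -> is_lhom v -> is_lhom f ->
      bistable_zero (Phi M' N' (v \o f \o u)%VF - (homk_map u v \o Phi M N f)%VF)).
Proof.
exists (fun M N => @PhiM K A M N).
case: HA => eps [a [b Hfs]].
split.
- move=> M N HM HN; split.
  + move=> k f g; apply/lfunP => c.
    by rewrite add_lfunE scale_lfunE !PhiE // comp_lfunDr -comp_lfunZr.
  + move=> f Hf c; split; apply/lfunP => x; rewrite !comp_lfunE.
      by rewrite regLE homkLE !PhiE // (actC HN) comp_lfunA.
    by rewrite regRE homkRE !PhiE // (actC HN) -!comp_lfunA Hf.
  + move=> f Hf; split.
      by move=> /(stable_Tr Hfs HM HN) [s ->]; exact: (Tr_bistable Hfs).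
    by move=> /(bistable_Tr Hfs HM HN) [s ->]; exact: (Tr_stable Hfs).
  + move=> g Hg; exists (g 1).
      move=> x.
      rewrite -homkRE -(bihomR Hg) regRE mul1r -homkLE -(bihomL Hg) regLE mulr1.
      by [].
    have -> : g - PhiM (g 1) = 0.
      apply/eqP; rewrite subr_eq0; apply/eqP/lfunP => c.
      by rewrite PhiE // -homkLE -(bihomL Hg) regLE mulr1.
    exact: (zero_bistable Hfs).
- move=> M M' N N' u v f HM HM' HN HN' Hu Hv Hf.
  have -> : PhiM (v \o f \o u)%VF - (homk_map u v \o PhiM f)%VF = 0.
    apply/eqP; rewrite subr_eq0; apply/eqP/lfunP => c.
    rewrite comp_lfunE !PhiE // /homk_map lfunE'; last first.
      by move=> k p q; rewrite comp_lfunDr -comp_lfunZr comp_lfunDl -comp_lfunZl.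
    by rewrite !comp_lfunA -(Hv c).
  exact: (zero_bistable Hfs).
Qed.
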